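(* Let $\sigma$ be the morphism on $\{c_0,c_1,c_2,c_3\}$ given by $\sigma(c_0)=c_0c_1$, $\sigma(c_1)=c_2c_3$, $\sigma(c_2)=c_0c_1c_2$, $\sigma(c_3)=c_3c_2c_3$, and let $x_\sigma=\lim_n\sigma^n(c_0)$ be its fixed point starting with $c_0$. Let $g$ be the morphism on $\{a,b\}$ given by $g(a)=baa$, $g(b)=ba$, with fixed point $x_G=\lim_n g^n(b)$, and let $\delta$ be the morphism $\delta(a)=c_2c_3$, $\delta(b)=c_0c_1$. Then $x_\sigma=\delta(x_G)$. Moreover, for all $n\ge1$, the number $p_\sigma(n)$ of distinct words of length $n$ occurring in $x_\sigma$ equals $n+3$. *)

(* Defs.v *)
From mathcomp Require Import all_boot.
From mathcomp Require Import boolp.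
Set Implicit Arguments. Unset Strict Implicit. Unset Printing Implicit Defensive.

(* Finite words over A are [seq A]; infinite words are [nat -> A]. *)

Definition morph {A B : Type} (f : A -> seq B) (w : seq A) : seq B :=
  flatten (map f w).

Definition is_limit_word {A : Type} (u : nat -> seq A) (x : nat -> A) : Prop :=
  forall N, exists n0, forall n, n0 <= n ->
    N < size (u n) /\ forall i (x0 : A), i <= N -> nth x0 (u n) i = x i.

(* Image of an infinite word under a non-erasing morphism f. Position j lies
   within the image of the prefix of length j+1. *)
Definition morph_inf {A B : Type} (b0 : B) (f : A -> seq B) (x : nat -> A) : nat -> B :=
  fun j => nth b0 (morph f [seq x k | k <- iota 0 j.+1]) j.

Definition factor_at {A : finType} (x : nat -> A) (n i : nat) : n.-tuple A :=
  [tuple x (i + j) | j < n].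

Definition complexity {A : finType} (x : nat -> A) (n : nat) : nat :=
  #|[set w : n.-tuple A | `[< exists i, w = factor_at x n i >]]|.

Definition c0 : 'I_4 := @Ordinal 4 0 isT.
Definition c1 : 'I_4 := @Ordinal 4 1 isT.
Definition c2 : 'I_4 := @Ordinal 4 2 isT.
Definition c3 : 'I_4 := @Ordinal 4 3 isT.
Definition la : 'I_2 := @Ordinal 2 0 isT.
Definition lb : 'I_2 := @Ordinal 2 1 isT.

Definition sigma (c : 'I_4) : seq 'I_4 :=
  match nat_of_ord c with
  | 0 => [:: c0; c1]
  | 1 => [:: c2; c3]
  | 2 => [:: c0; c1; c2]
  | _ => [:: c3; c2; c3]
  end.

Definition g (c : 'I_2) : seq 'I_2 :=
  match nat_of_ord c with
  | 0 => [:: lb; la; la]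
  | _ => [:: lb; la]
  end.

Definition delta (c : 'I_2) : seq 'I_4 :=
  match nat_of_ord c with
  | 0 => [:: c2; c3]
  | _ => [:: c0; c1]
  end.

(* Fixed points, built from the iterates (each iterate has length > i for the
   i-th letter); the theorem also asserts they are the limits. *)
Definition x_sigma : nat -> 'I_4 :=
  fun i => nth c0 (iter i.+1 (morph sigma) [:: c0]) i.
Definition x_G : nat -> 'I_2 :=
  fun i => nth lb (iter i.+1 (morph g) [:: lb]) i.

(* Main.v *)
Require Import Defs.
From mathcomp Require Import all_boot.
From mathcomp Require Import boolp.
From mathcomp Require Import zify.
Set Implicit Arguments. Unset Strict Implicit. Unset Printing Implicit Defensive.

Lemma morph_cat {A B : Type} (f : A -> seq B) u v :
  morph f (u ++ v) = morph f u ++ morph f v.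
Proof. by rewrite /morph map_cat flatten_cat. Qed.

Lemma morph_cons {A B : Type} (f : A -> seq B) c u :
  morph f (c :: u) = f c ++ morph f u.
Proof. by []. Qed.

Lemma morph_nil {A B : Type} (f : A -> seq B) : morph f [::] = [::].
Proof. by []. Qed.

Section Gen.
Variables (A : Type) (f : A -> seq A) (a0 : A) (t0 : seq A).
Hypothesis fa0 : f a0 = a0 :: t0.
Hypothesis f2 : forall c, 2 <= size (f c).

Lemma size_morph u : 2 * size u <= size (morph f u).
Proof.
elim: u => [|c u IH] //=; rewrite morph_cons size_cat.
have := f2 c; lia.
Qed.

Let I n := iter n (morph f) [:: a0].

Lemma iter_prefix n : exists r, I n.+1 = I n ++ r.
Proof.
elim: n => [|n [r IH]].
  by exists t0; rewrite /I /= /morph /= cats0 fa0.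
exists (morph f r).
by rewrite /I iterS -/(I n.+1) IH morph_cat -/(I n.+1) -IH.
Qed.

Lemma iter_prefix_le m n : m <= n -> exists r, I n = I m ++ r.
Proof.
elim: n => [|n IH]; first by rewrite leqn0 => /eqP ->; exists [::]; rewrite cats0.
rewrite leq_eqVlt => /orP [/eqP ->|]; first by exists [::]; rewrite cats0.
move=> /IH [r Hr]; have [r' Hr'] := iter_prefix n.
by exists (r ++ r'); rewrite Hr' Hr catA.
Qed.

Lemma size_iter n : n < size (I n).
Proof.
elim: n => [|n IH]; first by [].
rewrite /I iterS -/(I n); have := size_morph (I n); lia.
Qed.

Lemma nth_iter_stable x0 m n i : i < size (I m) -> m <= n ->
  nth x0 (I n) i = nth x0 (I m) i.
Proof.
move=> Hi /iter_prefix_le [r ->]; by rewrite nth_cat Hi.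
Qed.

Lemma nth_iter_fix x0 d n i : i < size (I n) ->
  nth x0 (I n) i = nth d (I i.+1) i.
Proof.
move=> Hi; have Hi1 : i < size (I i.+1) by have := size_iter i.+1; lia.
rewrite (set_nth_default x0 d Hi1).
rewrite -(nth_iter_stable x0 Hi (leq_maxl n i.+1)).
by rewrite -(nth_iter_stable x0 Hi1 (leq_maxr n i.+1)).
Qed.

Lemma limit_gen d : is_limit_word (fun n => I n) (fun i => nth d (I i.+1) i).
Proof.
move=> N; exists N.+1 => n Hn.
have Hs := size_iter n.
split; first lia.
move=> i x0 Hi; apply: nth_iter_fix; lia.
Qed.

End Gen.


Lemma parse {A B : Type} (f : A -> seq B) Y P S :
  morph f Y = P ++ S ->
  (S = [::] /\ P = morph f Y) \/
  exists Y1 c Y2 k, [/\ Y = Y1 ++ c :: Y2, k < size (f c),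
     P = morph f Y1 ++ take k (f c) & S = drop k (f c) ++ morph f Y2].
Proof.
elim: Y P => [|c Y IH] P /=.
  rewrite morph_nil; case: P => [|p P] //=; case: S => [|s S] //= _; by left.
rewrite morph_cons => E.
case: (ltnP (size P) (size (f c))) => HP.
  right; exists [::], c, Y, (size P); split => //.
    have := congr1 (take (size P)) E; rewrite take_cat HP take_size_cat //.
  have := congr1 (drop (size P)) E; rewrite drop_cat HP drop_size_cat //.
have E1 : P = f c ++ drop (size (f c)) P.
  have := congr1 (take (size (f c))) E; rewrite take_size_cat // takel_cat //.
  by move=> H; rewrite {1}H cat_take_drop.
have E2 : morph f Y = drop (size (f c)) P ++ S.
  have := congr1 (drop (size (f c))) E; rewrite drop_size_cat // => ->.
  rewrite drop_cat; case: ltnP => // H.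
  have e : size (f c) = size P by lia.
  by rewrite e subnn drop0 drop_size.
case: (IH _ E2) => [[-> H2]|[Y1 [c' [Y2 [k [HY Hk HP' HS]]]]]].
  by left; split => //; rewrite E1 H2.
right; exists (c :: Y1), c', Y2, k; split => //; first by rewrite HY.
by rewrite E1 HP' morph_cons catA.
Qed.


Lemma catsI' {T : eqType} (s1 s2 s : seq T) : s1 ++ s = s2 ++ s -> s1 = s2.
Proof.
move=> E; have Hs : size s1 = size s2.
  by have := congr1 size E; rewrite !size_cat; lia.
by apply/eqP; move/eqP: E; rewrite eqseq_cat // => /andP[].
Qed.

Lemma I2P (c : 'I_2) : c = la \/ c = lb.
Proof. by case: c => [[|[|]]] // H; [left|right]; apply/val_inj. Qed.

Lemma lab : la <> lb. Proof. by move=> /(congr1 val). Qed.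

Definition G n := iter n (morph g) [:: lb].
Definition L (u : seq 'I_2) := exists n p s, G n = p ++ u ++ s.
Definition RS u := L (rcons u la) /\ L (rcons u lb).

Ltac lcontra := move=> /(congr1 (map (@nat_of_ord 2))) /=; by [].

Lemma g2 c : 2 <= size (g c). Proof. by case: (I2P c) => ->. Qed.
Lemma glb : g lb = lb :: [:: la]. Proof. by []. Qed.

Lemma G_prefix n : exists r, G n.+1 = G n ++ r.
Proof. exact: (iter_prefix glb). Qed.

Lemma size_G n : n < size (G n).
Proof. exact: (size_iter lb g2). Qed.

Lemma x_G_G n i : i < size (G n) -> nth lb (G n) i = x_G i.
Proof. exact: (nth_iter_fix glb g2). Qed.

Lemma L_factor p u s : L (p ++ u ++ s) -> L u.
Proof.
move=> [n [p' [s' E]]]; exists n, (p' ++ p), (s ++ s').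
by rewrite E !catA.
Qed.

Lemma L_prefix u s : L (u ++ s) -> L u.
Proof. by move=> H; apply: (@L_factor [::] u s). Qed.

Lemma L_suffix p u : L (p ++ u) -> L u.
Proof. by move=> H; apply: (@L_factor p u [::]); rewrite cats0. Qed.

Lemma L_morph u : L u -> L (morph g u).
Proof.
move=> [n [p [s E]]]; exists n.+1, (morph g p), (morph g s).
by rewrite /G iterS -/(G n) E !morph_cat.
Qed.

Lemma L_G1 u : L u -> exists n p s, morph g (G n) = p ++ u ++ s.
Proof.
move=> [n [p [s E]]]; have [r Hr] := G_prefix n.
exists n, p, (s ++ r); by rewrite -[morph g _]/(G n.+1) Hr E -!catA.
Qed.

Lemma L_ext u : L u -> exists c, L (rcons u c).
Proof.
move=> [n [p [s E]]]; have [r Hr] := G_prefix n.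
have Hr0 : 0 < size r.
  have H1 := size_morph g2 (G n); have H2 := size_G n.
  have : size (G n.+1) = size (G n) + size r by rewrite Hr size_cat.
  rewrite -[G n.+1]/(morph g (G n)); lia.
have [c [s' Hsr]] : exists c s', s ++ r = c :: s'.
  by case: (s) => [|c s0]; [case: (r) Hr0 => [|c r0] //; exists c, r0 | exists c, (s0 ++ r)].
exists c, n.+1, p, s'; by rewrite Hr E -!catA Hsr -cats1 -catA.
Qed.

Lemma L_lab : L [:: la] /\ L [:: lb].
Proof. by split; [exists 1, [:: lb], [::] | exists 1, [::], [:: la]]. Qed.

Lemma morph_g_cons Y : morph g Y = [::] \/ exists S, morph g Y = lb :: la :: S.
Proof.
case: Y => [|c Y]; first by left.
by right; case: (I2P c) => ->; rewrite morph_cons /=; eexists.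
Qed.

Lemma morph_g_nota Y S : morph g Y <> la :: S.
Proof. by case: (morph_g_cons Y) => [->|[S' ->]] // [] /esym /lab. Qed.

Lemma drop_g c k : k < size (g c) ->
  (k = 0 /\ drop k (g c) = g c) \/ drop k (g c) = [:: la] \/
  (c = la /\ drop k (g c) = [:: la; la]).
Proof.
by case: (I2P c) => ->; case: k => [|[|[|k]]] //= _; auto.
Qed.

Lemma parse_b Y P S : morph g Y = P ++ lb :: S ->
  exists Y1 Y2, [/\ Y = Y1 ++ Y2, P = morph g Y1 & lb :: S = morph g Y2].
Proof.
move=> /parse [[]//|[Y1 [c [Y2 [k [HY Hk HP HS]]]]]].
case: (drop_g Hk) => [[Hk0 _]|[Hd|[_ Hd]]]; last 2 first.
- by move: HS; rewrite Hd; lcontra.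
- by move: HS; rewrite Hd; lcontra.
move: HP HS; rewrite Hk0 take0 drop0 cats0 => HP HS.
by exists Y1, (c :: Y2); split => //; rewrite morph_cons.
Qed.

Lemma no_bb : ~ L [:: lb; lb].
Proof.
move=> /L_G1 [n [p [s E]]]; move: E => /= /parse_b [Y1 [Y2 [_ _ H]]].
by case: (morph_g_cons Y2) H => [->|[S ->]] //; lcontra.
Qed.

Lemma no_aaa : ~ L [:: la; la; la].
Proof.
move=> /L_G1 [n [p [s E]]]; move: E => /parse [[]//|[Y1 [c [Y2 [k [HY Hk HP HS]]]]]].
case: (drop_g Hk) HS => [[-> ->]|[->|[_ ->]]] /=.
- by case: (I2P c) => ->; lcontra.
- by move=> [] /esym /morph_g_nota.
- by move=> [] /esym /morph_g_nota.
Qed.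


Definition Tset (t : seq 'I_2) := t = [::] \/ t = [:: la] \/ t = [:: la; la].

Lemma morph1 c : morph g [:: c] = g c.
Proof. by rewrite /morph /= cats0. Qed.

Lemma sparse Y p w : morph g Y = p ++ w -> exists y1 y2 t,
  [/\ Y = y1 ++ y2, w = t ++ morph g y2 &
      (t = [::] \/ t = [:: la] \/ (t = [:: la; la] /\ exists y1', y1 = rcons y1' la))].
Proof.
move/parse => [[Hw _]|[Y1 [c [Y2 [k [HY Hk HP HS]]]]]].
  exists Y, [::], [::]; split; [by rewrite cats0 | by rewrite Hw | by left].
case: (drop_g Hk) => [[Hk0 Hd]|[Hd|[Hc Hd]]].
- exists Y1, (c :: Y2), [::]; split => //; last by left.
  by rewrite HS Hd morph_cons.
- exists (rcons Y1 c), Y2, [:: la]; split; last by right; left.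
  + by rewrite cat_rcons.
  + by rewrite HS Hd.
- exists (rcons Y1 la), Y2, [:: la; la]; split.
  + by rewrite cat_rcons -Hc.
  + by rewrite HS Hd.
  + by right; right; split => //; exists Y1.
Qed.

Lemma Tset_nob t : Tset t -> lb \notin t.
Proof. by case=> [->|[->|->]]. Qed.

Lemma morph_g_b y : y != [::] -> lb \in morph g y.
Proof. by case: y => [|c y] // _; rewrite morph_cons mem_cat; case: (I2P c) => ->. Qed.

Lemma tg_uniq y y' t t' : Tset t -> Tset t' ->
  t ++ morph g y = t' ++ morph g y' -> t = t' /\ y = y'.
Proof.
elim/last_ind: y y' t t' => [|y c IH] y' t t' Ht Ht'.
  case/lastP: y' => [|y' c'] E; first by move: E; rewrite morph_nil !cats0.
  have : lb \in t ++ morph g [::] by rewrite E mem_cat morph_g_b ?orbT // -size_eq0 size_rcons.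
  by rewrite morph_nil cats0 (negbTE (Tset_nob Ht)).
case/lastP: y' => [|y' c'] E.
  have : lb \in t' ++ morph g [::] by rewrite -E mem_cat morph_g_b ?orbT // -size_eq0 size_rcons.
  by rewrite morph_nil cats0 (negbTE (Tset_nob Ht')).
move: E; rewrite -!cats1 !morph_cat !morph1 !catA.
have Hcc : c = c' -> (t ++ morph g y) ++ g c = (t' ++ morph g y') ++ g c' -> t = t' /\ y ++ [:: c] = y' ++ [:: c'].
  move=> <- /catsI' /IH [] // -> ->; by [].
case: (I2P c) Hcc => ->; case: (I2P c') => -> Hcc; try exact: Hcc.
- move/(congr1 rev); rewrite !rev_cat /=; lcontra.
- move/(congr1 rev); rewrite !rev_cat /=; lcontra.
Qed.

Lemma RS_last u : RS u -> u != [::] -> exists u', u = rcons u' la.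
Proof.
case/lastP: u => [|u e] // [_ Hb] _; case: (I2P e) => He; first by exists u; rewrite He.
exfalso; apply: no_bb; move: Hb; rewrite He -!cats1 -catA /=.
exact: L_suffix.
Qed.

Lemma occ w2 e : L (w2 ++ [:: lb; la; e]) -> exists y2 t,
  [/\ w2 = t ++ morph g y2, Tset t, L (rcons y2 e) & (t = [:: la; la] -> L (la :: rcons y2 e))].
Proof.
move=> /L_G1 [n [p [s E]]].
move: E; rewrite -catA /= catA => /parse_b [Y1 [Y2 [HY HP HS]]].
case: Y2 HY HS => [|c Y2] HY; first by [].
rewrite morph_cons => HS.
have Hce : c = e.
  case: (I2P c) HS => ->; case: (I2P e) => -> //=.
  by move=> [] /esym /morph_g_nota.
have := sparse (esym HP) => -[y1 [y2 [t [HY1 Hw Ht]]]].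
exists y2, t; split => //.
- by case: Ht => [->|[->|[-> _]]]; [left|right;left|right;right].
- exists n, y1, Y2; by rewrite HY HY1 -Hce -catA /= cat_rcons.
- case: Ht => [->|[->|[_ [y1' Hy1]]]] //.
  move=> _; exists n, y1', Y2; by rewrite HY HY1 Hy1 -Hce -catA cat_rcons /= cat_rcons.
Qed.

Lemma RS_desubst w : RS w -> 2 <= size w -> exists z,
  [/\ RS z, size z < size w & exists q, la :: morph g z ++ [:: lb; la] = q ++ w].
Proof.
move=> Hw Hs.
have Hne : w != [::] by case: (w) Hs.
have [w1 Hw1] := RS_last Hw Hne.
case/lastP: w1 Hw1 => [|w2 e] Hw1; first by move: Hs; rewrite Hw1.
case: (I2P e) Hw1 => -> Hw1.
  exfalso; apply: no_aaa; case: Hw => Ha _; move: Ha.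
  by rewrite Hw1 -!cats1 -!catA /=; apply: L_suffix.
have Ew : w = w2 ++ [:: lb; la] by rewrite Hw1 -!cats1 -catA.
case: Hw => Ha Hb.
move: Ha Hb; rewrite Ew -!cats1 -!catA /= => Ha Hb.
have [y2 [t [Hw2 Ht Hya Hya2]]] := occ Ha.
have [y2' [t' [Hw2' Ht' Hyb Hyb2]]] := occ Hb.
have [Htt Hyy] : t = t' /\ y2 = y2' by apply: tg_uniq; rewrite // -Hw2 -Hw2'.
subst t' y2'.
have Hm := size_morph g2 y2.
case: Ht Hya2 Hyb2 => [Ht|[Ht|Ht]] Hya2 Hyb2.
- exists y2; split => //.
  + by rewrite ?Ew Hw2 Ht !size_cat /=; lia.
  + by exists [:: la]; rewrite ?Ew Hw2 Ht.
- exists y2; split => //.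
  + by rewrite ?Ew Hw2 Ht !size_cat /=; lia.
  + by exists [::]; rewrite ?Ew Hw2 Ht.
- exists (la :: y2); split => //.
  + by split; [apply: Hya2 | apply: Hyb2].
  + by rewrite ?Ew Hw2 Ht !size_cat /=; lia.
  + by exists [:: la; lb]; rewrite ?Ew Hw2 Ht morph_cons /= -?catA.
Qed.


Definition compar (u v : seq 'I_2) := (exists q, u = q ++ v) \/ (exists q, v = q ++ u).

Lemma comp_sym u v : compar u v -> compar v u.
Proof. by case; [right|left]. Qed.

Lemma small_comp u v : RS u -> size u < 2 -> RS v -> compar u v.
Proof.
move=> Hu Hs Hv.
case: u Hu Hs => [|e u] Hu Hs; first by right; exists v; rewrite cats0.
case: u Hu Hs => [|? ?] Hu Hs //.
have [u' Hu'] := RS_last Hu isT.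
case: u' Hu' => [|? [|? ?]] //= [->].
case: v Hv => [|f v] Hv; first by left; exists [:: la].
have [v' ->] := RS_last Hv isT.
by right; exists v'; rewrite cats1.
Qed.

Lemma suff_comp (W p1 p2 u v : seq 'I_2) : W = p1 ++ u -> W = p2 ++ v -> compar u v.
Proof.
move=> E1 E2.
case: (leqP (size p1) (size p2)) => H.
- have Hp : p2 = p1 ++ drop (size p1) p2.
    have := congr1 (take (size p1)) (etrans (esym E1) E2).
    rewrite take_size_cat // takel_cat // => Ht; by rewrite {1}Ht cat_take_drop.
  left; exists (drop (size p1) p2).
  have := etrans (esym E1) E2; rewrite {1}Hp -catA => /eqP; rewrite eqseq_cat //.
  by case/andP => _ /eqP.
- have Hp : p1 = p2 ++ drop (size p2) p1.
    have := congr1 (take (size p2)) (etrans (esym E2) E1).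
    rewrite take_size_cat // takel_cat; last by apply: ltnW.
    by move=> Ht; rewrite {1}Ht cat_take_drop.
  right; exists (drop (size p2) p1).
  have := etrans (esym E2) E1; rewrite {1}Hp -catA => /eqP; rewrite eqseq_cat //.
  by case/andP => _ /eqP.
Qed.

Lemma W_suffix z1 z2 q : z1 = q ++ z2 -> exists q',
  la :: morph g z1 ++ [:: lb; la] = q' ++ (la :: morph g z2 ++ [:: lb; la]).
Proof.
move=> ->; case/lastP: q => [|q c]; first by exists [::].
have [g' Hg] : exists g', g c = g' ++ [:: la] by case: (I2P c) => ->; [exists [:: lb; la] | exists [:: lb]].
exists (la :: morph g q ++ g').
by rewrite -cats1 !morph_cat morph1 Hg /= -!catA.
Qed.

Lemma RS_comp N u v : size u + size v < N -> RS u -> RS v -> compar u v.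
Proof.
elim: N u v => [|N IH] u v // Hs Hu Hv.
case: (ltnP (size u) 2) => Hu2; first exact: small_comp.
case: (ltnP (size v) 2) => Hv2; first by apply: comp_sym; apply: small_comp.
have [zu [Hzu Szu [qu Equ]]] := RS_desubst Hu Hu2.
have [zv [Hzv Szv [qv Eqv]]] := RS_desubst Hv Hv2.
have : size zu + size zv < N by lia.
move=> /IH /(_ Hzu Hzv) [[q Hq]|[q Hq]]; have [q' Hq'] := W_suffix Hq.
- apply: (suff_comp Equ); by rewrite Hq' Eqv catA.
- apply: (suff_comp _ Eqv); by rewrite Hq' Equ catA.
Qed.

Lemma RS_uniq u v : RS u -> RS v -> size u = size v -> u = v.
Proof.
move=> Hu Hv Hs; case: (@RS_comp (size u + size v).+1 u v (ltnSn _) Hu Hv) => [[q Hq]|[q Hq]].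
- have : size q = 0 by move: Hs; rewrite Hq size_cat; lia.
  by move/size0nil => Hq0; rewrite Hq Hq0.
- have : size q = 0 by move: Hs; rewrite Hq size_cat; lia.
  by move/size0nil => Hq0; rewrite Hq Hq0.
Qed.

Lemma RS_suffix q z : RS (q ++ z) -> RS z.
Proof. by case; rewrite !rcons_cat => /L_suffix Ha /L_suffix Hb. Qed.

Lemma RS_grow z : RS z -> RS (morph g z ++ [:: lb; la]).
Proof.
case=> Ha Hb; split.
- by have := L_morph Ha; rewrite -!cats1 morph_cat morph1 -!catA.
- have [c Hc] := L_ext Hb.
  have := L_morph Hc; rewrite -!cats1 !morph_cat !morph1 -!catA => H.
  have [g' Hg] : exists g', g c = lb :: g' by case: (I2P c) => ->; eexists.
  move: H; rewrite Hg => H.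
  by apply: (@L_prefix _ g'); rewrite -!catA.
Qed.

Lemma RS_exists n : exists u, RS u /\ size u = n.
Proof.
have : exists z, RS z /\ n <= size z.
  elim: n => [|n [z [Hz Hn]]].
    by exists [::]; split => //; split; [apply: (proj1 L_lab) | apply: (proj2 L_lab)].
  exists (morph g z ++ [:: lb; la]); split; first exact: RS_grow.
  have := size_morph g2 z; rewrite size_cat /=; lia.
move=> [z [Hz Hn]]; exists (drop (size z - n) z); split.
- by apply: (@RS_suffix (take (size z - n) z)); rewrite cat_take_drop.
- rewrite size_drop; lia.
Qed.


Lemma nth_factor_at {T : finType} (x : nat -> T) n i j x0 : j < n ->
  nth x0 (factor_at x n i) j = x (i + j).
Proof. by move=> Hj; rewrite -[j]/(nat_of_ord (Ordinal Hj)) nth_mktuple. Qed.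

Lemma factor_L n i : L (factor_at x_G n i).
Proof.
pose m := i + n.
have Hm := size_G m.
have Hf : val (factor_at x_G n i) = take n (drop i (G m)).
  apply: (@eq_from_nth _ lb).
    by rewrite size_tuple size_takel // size_drop; lia.
  move=> j; rewrite size_tuple => Hj.
  rewrite nth_factor_at // nth_take // nth_drop x_G_G //; lia.
exists m, (take i (G m)), (drop n (drop i (G m))).
by rewrite Hf !cat_take_drop.
Qed.

Lemma L_factor_at n (w : n.-tuple 'I_2) : L w -> exists i, w = factor_at x_G n i.
Proof.
move=> [m [p [s E]]]; exists (size p).
apply: eq_from_tnth => j; rewrite tnth_mktuple (tnth_nth lb).
have Hj := ltn_ord j; have Hw := size_tuple w.
have Hs : size p + j < size (G m) by rewrite E !size_cat; lia.
rewrite -(x_G_G Hs) E nth_cat ltnNge leq_addr /= addKn nth_cat.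
by rewrite size_tuple Hj.
Qed.

Definition FS n := [set w : n.-tuple 'I_2 | `[< L w >]].

Lemma complexity_FS n : complexity x_G n = #|FS n|.
Proof.
rewrite /complexity /FS; apply: eq_card => w; rewrite !inE.
apply/asboolP/asboolP.
- by move=> [i ->]; apply: factor_L.
- by move/L_factor_at.
Qed.

Lemma tuple_rcons n (w : n.+1.-tuple 'I_2) : exists (w' : n.-tuple 'I_2) c, val w = rcons w' c.
Proof.
rewrite (tuple_eta w) /=.
exists [tuple of belast (thead w) (behead w)], (last (thead w) (behead w)).
by rewrite /= -lastI.
Qed.

Definition fc n c (w : n.-tuple 'I_2) : n.+1.-tuple 'I_2 := [tuple of rcons w c].

Lemma fc_inj n c : injective (@fc n c).
Proof. move=> w1 w2 H; apply: val_inj; move: H => /(congr1 val) /=; exact: rcons_injl. Qed.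

Lemma FS_succ n : #|FS n.+1| = #|FS n| + 1.
Proof.
pose A := [set w : n.-tuple 'I_2 | `[< L (rcons w la) >]].
pose B := [set w : n.-tuple 'I_2 | `[< L (rcons w lb) >]].
have HU : FS n = A :|: B.
  apply/setP => w; rewrite !inE; apply/asboolP/orP.
  - move=> /L_ext [c Hc]; case: (I2P c) Hc => -> Hc; [left|right]; exact/asboolP.
  - by case=> /asboolP; rewrite -cats1 => /L_prefix.
have HI : #|A :&: B| = 1.
  have [u [Hu Hsu]] := RS_exists n.
  have Hsu' : size u == n by apply/eqP.
  apply/eqP/cards1P; exists (Tuple Hsu'); apply/setP => w; rewrite !inE.
  apply/andP/eqP.
  - move=> [/asboolP Ha /asboolP Hb]; apply: val_inj => /=.
    by apply: RS_uniq; rewrite ?size_tuple //; split.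
  - by move=> -> /=; case: Hu => Ha Hb; split; apply/asboolP.
have HS : FS n.+1 = fc la @: A :|: fc lb @: B.
  apply/setP => w; rewrite !inE; apply/asboolP/orP.
  - have [w' [c Hw]] := tuple_rcons w.
    have Ew : w = fc c w' by apply: val_inj.
    rewrite Hw => HL; case: (I2P c) Ew HL => -> Ew HL; [left|right];
      apply/imsetP; exists w' => //; rewrite inE; exact/asboolP.
  - by case=> /imsetP [w' ]; rewrite inE => /asboolP H ->.
have HD : fc la @: A :&: fc lb @: B = set0.
  apply/setP => w; rewrite !inE; apply/negP => /andP [/imsetP [w1 _ ->] /imsetP [w2 _]].
  by move/(congr1 val) => /= /eqP; rewrite eqseq_rcons => /andP [_ /eqP /lab].
rewrite HS cardsU HD cards0 subn0 !card_imset; try exact: fc_inj.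
by have := cardsUI A B; rewrite HI -HU => <-.
Qed.

Lemma complexity_G n : complexity x_G n = n.+1.
Proof.
rewrite complexity_FS; elim: n => [|n IH]; last by rewrite FS_succ IH addn1.
have -> : FS 0 = [set: 0.-tuple 'I_2].
  apply/setP => w; rewrite !inE; apply/asboolP.
  by rewrite tuple0; exists 0, [::], [:: lb].
by rewrite cardsT card_tuple.
Qed.


Definition d0 (c : 'I_2) := nth c0 (delta c) 0.
Definition d1 (c : 'I_2) := nth c0 (delta c) 1.
Definition dd (j : nat) := if odd j then d1 else d0.

Lemma delta_d c : delta c = [:: d0 c; d1 c].
Proof. by case: (I2P c) => ->. Qed.

Lemma morph_sd u : morph sigma (morph delta u) = morph delta (morph g u).
Proof.
elim: u => [|c u IH] //; rewrite !morph_cons !morph_cat IH; congr (_ ++ _).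
by case: (I2P c) => ->.
Qed.

Lemma iter_sd n : iter n.+1 (morph sigma) [:: c0] = morph delta (G n).
Proof.
elim: n => [|n IH]; first by [].
by rewrite iterS IH morph_sd.
Qed.

Lemma nth_morph_delta s j : j < 2 * size s ->
  nth c0 (morph delta s) j = dd j (nth lb s j./2).
Proof.
elim: s j => [|c s IH] j //= Hj.
rewrite morph_cons delta_d.
case: j Hj => [|[|j]] Hj //.
rewrite /= IH; last lia.
by rewrite /dd /=; case: (odd j).
Qed.

Lemma x_sigmaE j : x_sigma j = dd j (x_G j./2).
Proof.
have Hs := size_G j.
rewrite /x_sigma iter_sd nth_morph_delta; last lia.
by rewrite x_G_G //; lia.
Qed.

Lemma part3 : x_sigma = morph_inf c0 delta x_G.
Proof.
apply: funext => j; rewrite /morph_inf x_sigmaE nth_morph_delta; last by rewrite size_map size_iota; lia.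
by rewrite (nth_map 0) ?size_iota ?nth_iota //; lia.
Qed.


Section Cplx.
Variable n : nat.
Hypothesis n1 : 1 <= n.
Let m1 := n.+1./2.
Let m2 := n./2.+1.

Definition Em (v : m1.-tuple 'I_2) : n.-tuple 'I_4 :=
  [tuple dd j (nth la v j./2) | j < n].
Definition Om (v : m2.-tuple 'I_2) : n.-tuple 'I_4 :=
  [tuple dd j.+1 (nth la v j.+1./2) | j < n].

Lemma d0_inj : injective d0. Proof. by move=> c c'; case: (I2P c) => ->; case: (I2P c') => ->. Qed.
Lemma d1_inj : injective d1. Proof. by move=> c c'; case: (I2P c) => ->; case: (I2P c') => ->. Qed.
Lemma d01 c c' : d0 c <> d1 c'.
Proof. by case: (I2P c) => ->; case: (I2P c') => ->. Qed.

Lemma Em_fac i : Em (factor_at x_G m1 i) = factor_at x_sigma n i.*2.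
Proof.
apply: eq_from_tnth => j; rewrite !tnth_mktuple x_sigmaE nth_factor_at; last first.
  by have := ltn_ord j; rewrite /m1; lia.
rewrite /dd; have -> : odd (i.*2 + j) = odd j by lia.
by have -> : (i.*2 + j)./2 = i + j./2 by lia.
Qed.

Lemma Om_fac i : Om (factor_at x_G m2 i) = factor_at x_sigma n i.*2.+1.
Proof.
apply: eq_from_tnth => j; rewrite !tnth_mktuple x_sigmaE nth_factor_at; last first.
  by have := ltn_ord j; rewrite /m2; lia.
rewrite /dd; have -> : odd (i.*2.+1 + j) = odd j.+1 by lia.
by have -> : (i.*2.+1 + j)./2 = i + j.+1./2 by lia.
Qed.

Lemma Em_inj : injective Em.
Proof.
move=> v1 v2 H; apply: eq_from_tnth => k.
have Hk : k.*2 < n by have := ltn_ord k; rewrite /m1; lia.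
have := congr1 (fun t => tnth t (Ordinal Hk)) H; rewrite !tnth_mktuple /dd /= odd_double doubleK.
by rewrite !(tnth_nth la) => /d0_inj.
Qed.

Lemma Om_inj : injective Om.
Proof.
move=> v1 v2 H; apply: eq_from_tnth => k.
case: (posnP k) => Hk0.
  have Hj : 0 < n by [].
  have := congr1 (fun t => tnth t (Ordinal Hj)) H; rewrite !tnth_mktuple /dd /=.
  by rewrite !(tnth_nth la) Hk0 => /d1_inj.
have Hk : k.*2.-1 < n by have := ltn_ord k; rewrite /m2; lia.
have E1 : odd k.*2.-1 = true by lia.
have E2 : uphalf k.*2.-1 = k by lia.
have := congr1 (fun t => tnth t (Ordinal Hk)) H; rewrite !tnth_mktuple /dd /= E1 E2 /=.
by rewrite !(tnth_nth la) => /d0_inj.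
Qed.

Definition FG m := [set v : m.-tuple 'I_2 | `[< exists i, v = factor_at x_G m i >]].

Lemma complexity_sigma : complexity x_sigma n = n + 3.
Proof.
have HS : [set w : n.-tuple 'I_4 | `[< exists i, w = factor_at x_sigma n i >]] =
          Em @: FG m1 :|: Om @: FG m2.
  apply/setP => w; rewrite !inE; apply/asboolP/orP.
  - move=> [i ->]; rewrite -(odd_double_half i).
    case: (odd i) => /=.
    + right; apply/imsetP; exists (factor_at x_G m2 i./2); last by rewrite Om_fac.
      by rewrite inE; apply/asboolP; exists i./2.
    + left; apply/imsetP; exists (factor_at x_G m1 i./2); last by rewrite Em_fac.
      by rewrite inE; apply/asboolP; exists i./2.
  - case=> /imsetP [v]; rewrite inE => /asboolP [k ->] ->.
    + by exists k.*2; rewrite Em_fac.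
    + by exists k.*2.+1; rewrite Om_fac.
have HD : Em @: FG m1 :&: Om @: FG m2 = set0.
  apply/setP => w; rewrite !inE; apply/negP => /andP [/imsetP [v1 _ ->] /imsetP [v2 _]].
  have Hj : 0 < n by [].
  move/(congr1 (fun t => tnth t (Ordinal Hj))); rewrite !tnth_mktuple /dd /=.
  exact: d01.
rewrite /complexity HS cardsU HD cards0 subn0 !card_imset; try exact: Em_inj; try exact: Om_inj.
have := complexity_G m1; have := complexity_G m2; rewrite /complexity -/(FG m1) -/(FG m2).
rewrite /m1 /m2 => -> ->; lia.
Qed.

End Cplx.


Lemma sigma2 c : 2 <= size (sigma c).
Proof. by case: c => [[|[|[|[|]]]] ?]. Qed.

Lemma sigma_c0 : sigma c0 = c0 :: [:: c1].
Proof. by []. Qed.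

Theorem proposition2 :
  is_limit_word (fun n => iter n (morph sigma) [:: c0]) x_sigma /\
  is_limit_word (fun n => iter n (morph g) [:: lb]) x_G /\
  x_sigma = morph_inf c0 delta x_G /\
  (forall n, 1 <= n -> complexity x_sigma n = n + 3).
Proof.
split; first exact: (limit_gen sigma_c0 sigma2 c0).
split; first exact: (limit_gen glb g2 lb).
split; first exact: part3.
by move=> n Hn; apply: complexity_sigma.
Qed.
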